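(* There is a full and faithful functor \(\mathbf{HGraph}\hookrightarrow\mathbf{FHGraph}\).
   Context: A hypergraph is a pair \((A,H)\) with \(H\subseteq\mathcal{P}(A)\); a map of hypergraphs \((A,H)\to(A',H')\) is a function \(f\colon A\to A'\) with \(f(U)\in H'\) for all \(U\in H\); these form \(\mathbf{HGraph}\). An F-hypergraph is a pair \((A,H)\) with \(H\subseteq A\times\mathcal{P}(A)\) (hyperedges \((a,U)\)); a map of F-hypergraphs \((A,H)\to(A',H')\) is a function \(f\colon A\to A'\) with \((f(a),f(V))\in H'\) for all \((a,V)\in H\); these form \(\mathbf{FHGraph}\). *)

(* Defs.v *)
From mathcomp Require Import all_boot.
From mathcomp Require Export classical_sets.
Set Implicit Arguments. Unset Strict Implicit. Unset Printing Implicit Defensive.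
Local Open Scope classical_set_scope.

Record hgraph := HGraph { hg_carrier : Type; hg_edges : set (set hg_carrier) }.
Arguments hg_edges : clear implicits.

Record hgraph_hom (X Y : hgraph) := HGHom {
  hgh_fun :> hg_carrier X -> hg_carrier Y;
  hgh_prop : forall U, hg_edges X U -> hg_edges Y (hgh_fun @` U) }.

Record fhgraph := FHGraph
  { fhg_carrier : Type; fhg_edges : set (fhg_carrier * set fhg_carrier) }.
Arguments fhg_edges : clear implicits.

Record fhgraph_hom (X Y : fhgraph) := FHGHom {
  fhh_fun :> fhg_carrier X -> fhg_carrier Y;
  fhh_prop : forall a V, fhg_edges X (a, V) ->
                         fhg_edges Y (fhh_fun a, fhh_fun @` V) }.

Definition hg_id (X : hgraph) : hgraph_hom X X.
Proof. refine (@HGHom X X id _) => U HU. by rewrite image_id. Defined.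

Definition hg_comp (X Y Z : hgraph) (g : hgraph_hom Y Z) (f : hgraph_hom X Y)
  : hgraph_hom X Z.
Proof.
refine (@HGHom X Z (hgh_fun g \o hgh_fun f) _) => U HU.
rewrite -image_comp. by apply: hgh_prop; apply: hgh_prop.
Defined.

Definition fhg_id (X : fhgraph) : fhgraph_hom X X.
Proof. refine (@FHGHom X X id _) => a V HV. by rewrite image_id. Defined.

Definition fhg_comp (X Y Z : fhgraph) (g : fhgraph_hom Y Z) (f : fhgraph_hom X Y)
  : fhgraph_hom X Z.
Proof.
refine (@FHGHom X Z (fhh_fun g \o fhh_fun f) _) => a V HV.
rewrite -image_comp. by apply: (fhh_prop g); apply: (fhh_prop f).
Defined.

Definition is_functor (Fo : hgraph -> fhgraph)
  (Fh : forall X Y : hgraph, hgraph_hom X Y -> fhgraph_hom (Fo X) (Fo Y)) : Prop :=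
  (forall X, Fh X X (hg_id X) = fhg_id (Fo X)) /\
  (forall (X Y Z : hgraph) (g : hgraph_hom Y Z) (f : hgraph_hom X Y),
      Fh X Z (hg_comp g f) = fhg_comp (Fh Y Z g) (Fh X Y f)).

Definition is_full (Fo : hgraph -> fhgraph)
  (Fh : forall X Y : hgraph, hgraph_hom X Y -> fhgraph_hom (Fo X) (Fo Y)) : Prop :=
  forall (X Y : hgraph) (g : fhgraph_hom (Fo X) (Fo Y)),
    exists f : hgraph_hom X Y, Fh X Y f = g.

Definition is_faithful (Fo : hgraph -> fhgraph)
  (Fh : forall X Y : hgraph, hgraph_hom X Y -> fhgraph_hom (Fo X) (Fo Y)) : Prop :=
  forall (X Y : hgraph) (f f' : hgraph_hom X Y), Fh X Y f = Fh X Y f' -> f = f'.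

(* Main.v *)
Require Import Defs.
From mathcomp Require Import all_boot classical_sets.
From mathcomp Require Import boolp.
Local Open Scope classical_set_scope.

Section Aux.
Definition carr (X : hgraph) := option (option (hg_carrier X)).
Definition NN {T : Type} : option (option T) := None.
Definition MM {T : Type} : option (option T) := Some None.
Definition SS {T : Type} (a : T) : option (option T) := Some (Some a).

Definition fedges (X : hgraph) : set (carr X * set (carr X)) :=
  fun p => p = (NN, set0) \/ p = (MM, [set NN]) \/
    (exists U, hg_edges X U /\ p = (NN, MM |` (SS @` U))) \/
    (exists a, p = (SS a, [set SS a])).

Definition Fo (X : hgraph) : fhgraph := @FHGraph (carr X) (fedges X).

Definition lift {A B : Type} (f : A -> B) : option (option A) -> option (option B) :=
  option_map (option_map f).

Lemma lift_img {A B : Type} (f : A -> B) (U : set A) :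
  lift f @` (MM |` (SS @` U)) = MM |` (SS @` (f @` U)).
Proof.
apply/seteqP; split => x.
  case=> y [->|[a Ua <-]] <-; [by left| right; exists (f a) => //; by exists a].
case=> [->|[b [a Ua <-] <-]]; first by exists MM => //; left.
by exists (SS a) => //; right; exists a.
Qed.

Lemma MS_inj {A : Type} (U V : set A) :
  MM |` (SS @` U) = MM |` (SS @` V) -> U = V.
Proof.
move=> E; apply/seteqP; split => x Ux.
  have : (MM |` (SS @` U)) (SS x) by right; exists x.
  by rewrite E => -[//|[y Vy [<-]]].
have : (MM |` (SS @` V)) (SS x) by right; exists x.
by rewrite -E => -[//|[y Vy [<-]]].
Qed.

Definition Fh (X Y : hgraph) (f : hgraph_hom X Y) : fhgraph_hom (Fo X) (Fo Y).
Proof.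
refine (@FHGHom (Fo X) (Fo Y) (lift f) _) => a V [E|[E|[[U [HU E]]|[b E]]]]; case: E => -> ->.
- by left; rewrite image_set0.
- by right; left; rewrite image_set1.
- by right; right; left; exists (f @` U); split; [apply: hgh_prop|rewrite lift_img].
- by right; right; right; exists (f b); rewrite image_set1.
Defined.

Lemma fh_eq (X Y : fhgraph) (g g' : fhgraph_hom X Y) :
  (forall x, g x = g' x) -> g = g'.
Proof.
case: g g' => g Hg [g' Hg'] /= E.
have ? : g = g' by apply: funext.
subst; congr FHGHom; exact: Prop_irrelevance.
Qed.

Lemma hh_eq (X Y : hgraph) (g g' : hgraph_hom X Y) :
  (forall x, g x = g' x) -> g = g'.
Proof.
case: g g' => g Hg [g' Hg'] /= E.
have ? : g = g' by apply: funext.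
subst; congr HGHom; exact: Prop_irrelevance.
Qed.
End Aux.

Theorem proposition3p5 :
  exists (Fo : hgraph -> fhgraph)
         (Fh : forall X Y : hgraph, hgraph_hom X Y -> fhgraph_hom (Fo X) (Fo Y)),
    [/\ is_functor Fh, is_full Fh & is_faithful Fh].
Proof.
exists Fo, Fh; split.
- split.
    by move=> X; apply: fh_eq => -[[a|]|].
  by move=> X Y Z g f; apply: fh_eq => -[[a|]|].
- move=> X Y g.
  have gN : g NN = NN.
    have := fhh_prop (a:=NN) (V:=set0) g (or_introl erefl).
    rewrite image_set0 => -[E|[E|[[U [_ E]]|[b E]]]]; case: E => // H1 E.
    + by move/seteqP: E => [_ /(_ NN erefl)].
    + by move/seteqP: E => [_ /(_ (SS b) erefl)].
  have gM : g MM = MM.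
    have := fhh_prop (a:=MM) (V:=[set NN]) g (or_intror (or_introl erefl)).
    rewrite image_set1 gN => -[E|[E|[[U [_ E]]|[b E]]]]; case: E => // H1 E.
    + by move/seteqP: E => [/(_ NN erefl)].
    + by move/seteqP: E => [/(_ NN erefl)] /= -[//|[?]].
    + by move/seteqP: E => [/(_ NN erefl)].
  have gS : forall a, exists b, g (SS a) = SS b.
    move=> a.
    have := fhh_prop (a:=SS a) (V:=[set SS a]) g (or_intror (or_intror (or_intror (ex_intro _ a erefl)))).
    rewrite image_set1; case: (g (SS a)) => [[b|]|].
    + by move=> _; exists b.
    + move=> -[E|[E|[[U [_ E]]|[b E]]]]; case: E => // E.
      by move/seteqP: E => [/(_ MM erefl)].
    + move=> -[E|[E|[[U [_ E]]|[b E]]]]; case: E => // E.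
      * by move/seteqP: E => [/(_ NN erefl)].
      * by move/seteqP: E => [/(_ NN erefl)] /= -[//|[?]].
  pose f (a : hg_carrier X) : hg_carrier Y := projT1 (cid (gS a)).
  have fE : forall a, g (SS a) = SS (f a) by move=> a; rewrite /f; case: cid.
  have gl : forall x, g x = lift f x by move=> [[a|]|] //; rewrite ?fE.
  have fP : forall U, hg_edges X U -> hg_edges Y (f @` U).
    move=> U HU.
    have := fhh_prop (a:=NN) (V:=MM |` (SS @` U)) g (or_intror (or_intror (or_introl (ex_intro _ U (conj HU erefl))))).
    have -> : g @` (MM |` (SS @` U)) = lift f @` (MM |` (SS @` U)).
      by apply/seteqP; split => x [y Hy <-]; exists y => //; rewrite gl.
    rewrite lift_img gN.
    move=> -[E|[E|[[U' [HU' E]]|[b E]]]]; case: E => //.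
    + by move=> /seteqP[/(_ MM (or_introl erefl))].
    + by move=> /MS_inj ->.
  exists (HGHom fP); apply: fh_eq => x /=; by rewrite gl.
- move=> X Y E1 E2 E; apply: hh_eq => a.
  have : Fh X Y E1 (SS a) = Fh X Y E2 (SS a) by rewrite E.
  by case.
Qed.
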